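(* Let $a_1,a_2,a_3$ be assemblies of connected graphs on the same finite vertex set such that the components of $a_1$ and of $a_2$ are regular graphs. If $a_1$ divides $a_2$ and $a_2$ divides $a_3$, then $a_1$ divides $a_3$ and $\phi_{(a_2,a_3/a_2)}(x,t)$ divides $\phi_{(a_1,a_3/a_1)}(x,t)$ in $\mathbb R[x,t]$.
   Context: All graphs finite and simple. Identify a graph on a finite set $V$ with the assembly of its connected components. $a_1$ divides $a_2$ if there is a graph $h$ whose vertex set is the set of vertex sets $B_1,\dots,B_k$ of the components of $a_1$ with $E(a_2)=E(a_1)\cup\{\{x,y\}:x\in B,y\in B',\{B,B'\}\in E(h)\}$; then $a_2/a_1:=h$. For an assembly $a$ of regular graphs $g_1,\dots,g_k$ on blocks $B_j$ with $n_j=|B_j|$, regularities $r_j$, and a graph $h$ on $\{B_1,\dots,B_k\}$, let $N_j=\sum_{s:\{B_s,B_j\}\in E(h)}n_s$; $A(a,h)$ is the $k\times k$ matrix with diagonal $r_j$ and $(i,j)$ entry ($i\neq j$) $\sqrt{n_in_j}$ if $\{B_i,B_j\}\in E(h)$, else $0$; $D(a,h)=\mathrm{diag}(r_j+N_j)$; and $\phi_{(a,h)}(x,t)=\det\big(xI_k-(A(a,h)-tD(a,h))\big)$. *)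

(* Defs.v *)
From HB Require Import structures.
From mathcomp Require Import all_boot all_order all_algebra.
From mathcomp Require Import reals.
Set Implicit Arguments. Unset Strict Implicit. Unset Printing Implicit Defensive.
Import Order.TTheory GRing.Theory Num.Theory.
Local Open Scope ring_scope.

(* A (finite simple) graph on the finite vertex set T is a symmetric,
   irreflexive boolean adjacency relation. A graph is identified with the
   assembly of its connected components. *)
Definition simple_graph (T : finType) (g : rel T) : Prop :=
  (forall x y, g x y = g y x) /\ (forall x, ~~ g x x).

Definition blocks (T : finType) (g : rel T) : {set {set T}} :=
  [set [set y | connect g x y] | x : T].

Definition deg (T : finType) (g : rel T) (x : T) : nat := #|[set y | g x y]|.

Definition regular_components (T : finType) (g : rel T) : Prop :=
  forall x y, connect g x y -> deg g x = deg g y.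

(* h (a graph on the blocks of a1) is the quotient a2/a1 *)
Definition is_quot (T : finType) (a1 a2 : rel T) (h : rel {set T}) : Prop :=
  [/\ (forall B B', B \in blocks a1 -> B' \in blocks a1 -> h B B' = h B' B),
      (forall B, B \in blocks a1 -> ~~ h B B) &
      (forall x y, a2 x y =
         a1 x y || [exists B in blocks a1, exists B' in blocks a1,
                     [&& x \in B, y \in B' & h B B']])].

Definition divides (T : finType) (a1 a2 : rel T) : Prop :=
  exists h : rel {set T}, is_quot a1 a2 h.

Definition blk (T : finType) (a : rel T) (i : 'I_#|blocks a|) : {set T} :=
  enum_val i.
Arguments blk {T} a i.

Definition bdeg (T : finType) (a : rel T) (B : {set T}) : nat :=
  if [pick x in B] is Some x then deg a x else 0.

Definition Nsum (T : finType) (a : rel T) (h : rel {set T})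
    (j : 'I_#|blocks a|) : nat :=
  \sum_(s < #|blocks a| | h (blk a s) (blk a j)) #|blk a s|.
Arguments Nsum {T} a h j.

Definition Amx (R : realType) (T : finType) (a : rel T) (h : rel {set T})
  : 'M[R]_#|blocks a| :=
  \matrix_(i, j)
    if i == j then (bdeg a (blk a i))%:R
    else if h (blk a i) (blk a j) then Num.sqrt ((#|blk a i| * #|blk a j|)%N%:R)
    else 0.

Arguments Amx R {T} a h.

Definition Dmx (R : realType) (T : finType) (a : rel T) (h : rel {set T})
  : 'M[R]_#|blocks a| :=
  \matrix_(i, j) if i == j then (bdeg a (blk a i) + Nsum a h j)%N%:R else 0.

Arguments Dmx R {T} a h.

(* phi_(a,h)(x,t) = det(x I - (A - t D)) in R[t][x] = R[x,t]:
   x is the outer variable 'X, t is the inner variable ('X)%:P. *)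
Definition phi (R : realType) (T : finType) (a : rel T) (h : rel {set T})
  : {poly {poly R}} :=
  \det (\matrix_(i, j)
     ((i == j)%:R * 'X
      - ((Amx R a h i j)%:P)%:P + ('X)%:P * ((Dmx R a h i j)%:P)%:P)).

Definition pdivides (R : realType) (p q : {poly {poly R}}) : Prop :=
  exists r : {poly {poly R}}, q = r * p.

(* Main.v *)
Require Import Defs.
From mathcomp Require Import all_boot all_order all_algebra.
From mathcomp Require Import reals.
From mathcomp Require Import ring.
Set Implicit Arguments. Unset Strict Implicit. Unset Printing Implicit Defensive.
Import Order.TTheory GRing.Theory Num.Theory.

Section Graph.
Variable T : finType.

Definition bl (a : rel T) x := [set y | connect a x y].

Lemma bl_blocks a x : bl a x \in blocks a.
Proof. by apply/imsetP; exists x. Qed.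

Lemma bl_refl a x : x \in bl a x.
Proof. by rewrite inE connect0. Qed.

Section Sym.
Variable a : rel T.
Hypothesis sa : symmetric a.
Let csym : connect_sym a := sym_connect_sym sa.

Lemma bl_eq x y : (bl a x == bl a y) = connect a x y.
Proof.
apply/eqP/idP => [e|cxy].
  by have := bl_refl a y; rewrite -e inE.
apply/setP => z; rewrite !inE; apply/idP/idP => h.
  by apply: connect_trans h; rewrite csym.
exact: connect_trans h.
Qed.

Lemma in_blocks B x : B \in blocks a -> x \in B -> B = bl a x.
Proof.
case/imsetP => z _ -> xz; apply/eqP; rewrite bl_eq.
by move: xz; rewrite inE.
Qed.

Lemma in_bl x y : (y \in bl a x) = connect a x y.
Proof. by rewrite inE. Qed.

Variables (b : rel T) (h : rel {set T}).
Hypothesis q : is_quot a b h.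

Lemma Q_sub x y : a x y -> b x y.
Proof. by case: q => _ _ ->; move->. Qed.

Lemma Q_in x y : connect a x y -> b x y = a x y.
Proof.
case: q => _ hirr -> cxy; case: (a x y) => //=.
apply/negbTE/negP => /existsP[B /andP[Bb /existsP[B' /andP[B'b /and3P[xB yB' hB]]]]].
have e1 := in_blocks Bb xB; have e2 := in_blocks B'b yB'.
have : B = B' by rewrite e1 e2; apply/eqP; rewrite bl_eq.
by move=> eB; move: hB; rewrite eB (negbTE (hirr _ B'b)).
Qed.

Lemma Q_out x y : ~~ connect a x y -> b x y = h (bl a x) (bl a y).
Proof.
case: q => _ hirr -> ncxy.
have -> : a x y = false by apply/negP => /connect1; apply/negP.
rewrite /=; apply/existsP/idP.
  case=> B /andP[Bb /existsP[B' /andP[B'b /and3P[xB yB' hB]]]].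
  by rewrite -(in_blocks Bb xB) -(in_blocks B'b yB').
move=> hxy; exists (bl a x); rewrite bl_blocks /=; apply/existsP.
by exists (bl a y); rewrite bl_blocks !bl_refl.
Qed.

Lemma h_sym B B' : B \in blocks a -> B' \in blocks a -> h B B' = h B' B.
Proof. by case: q => + _ _; apply. Qed.

Lemma h_irr B : B \in blocks a -> h B B = false.
Proof. by case: q => _ + _ => /(_ B) hh /hh /negbTE. Qed.


Lemma L_cnt x (C : {set T}) : x \in C ->
  (forall y z, y \in C -> connect a y z -> z \in C) ->
  #|[set y in C | b x y]| =
   (deg a x + \sum_(B in blocks a | (B \subset C) && h (bl a x) B) #|B|)%N.
Proof.
move=> xC clC.
rewrite -sum1_card (partition_big (bl a) (mem (blocks a))) /=; last first.
  by move=> y _; exact: bl_blocks.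
rewrite (bigD1 (bl a x)) ?bl_blocks //=; congr (_ + _)%N.
  rewrite /deg -sum1_card; apply: eq_bigl => y; rewrite !inE eq_sym bl_eq.
  apply/idP/idP.
    by case/andP=> /andP[_ bxy] cxy; rewrite -(Q_in cxy).
  move=> axy; have cxy := connect1 axy.
  by rewrite cxy (clC x y xC cxy) (Q_sub axy).
rewrite [RHS]big_mkcondr /= [in RHS](bigD1 (bl a x)) ?bl_blocks //=.
rewrite (h_irr (bl_blocks a x)) andbF add0n.
apply: eq_bigr => B /andP[Bb neB].
transitivity (\sum_(y in B | (B \subset C) && h (bl a x) B) 1)%N.
  apply: eq_bigl => y; rewrite !inE.
  have yBE : (bl a y == B) = (y \in B).
    apply/eqP/idP => [<-|yB]; first exact: bl_refl.
    by rewrite (in_blocks Bb yB).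
  rewrite yBE; case yB: (y \in B); rewrite ?andbT ?andbF //=.
  have eB := in_blocks Bb yB.
  have ncxy : ~~ connect a x y by rewrite -bl_eq -eB eq_sym.
  rewrite (Q_out ncxy) -eB; congr (_ && _).
  apply/idP/idP => [yC|sBC]; last exact: (subsetP sBC y yB).
  apply/subsetP => z.
  by rewrite eB in_bl; apply: clC.
case: ifP => c.
  rewrite (eq_bigl (mem B)) ?sum1_card // => y.
  by rewrite andbT.
by rewrite big_pred0 // => y; rewrite andbF.
Qed.

End Sym.

Lemma connect_mono (a1 a2 : rel T) :
  (forall x y, a1 x y -> a2 x y) -> forall x y, connect a1 x y -> connect a2 x y.
Proof. by move=> s; apply: connect_sub => x y /s /connect1. Qed.

Lemma quot_sub (a b : rel T) (h : rel {set T}) x y : is_quot a b h -> a x y -> b x y.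
Proof. by case=> _ _ ->; move->. Qed.

Lemma div_trans (a1 a2 a3 : rel T) : symmetric a1 -> symmetric a2 -> symmetric a3 ->
  divides a1 a2 -> divides a2 a3 -> divides a1 a3.
Proof.
move=> s1 s2 s3 [h12 q12] [h23 q23].
have c12 := connect_mono (fun x y => @quot_sub a1 a2 h12 x y q12).
have cs1 := sym_connect_sym s1; have cs2 := sym_connect_sym s2.
have unif x x' y y' : connect a1 x x' -> connect a1 y y' -> ~~ connect a1 x y ->
    a3 x y = a3 x' y'.
  move=> cx cy nc.
  have nc' : ~~ connect a1 x' y'.
    apply: contra nc => c'; apply: connect_trans cx _.
    by apply: connect_trans c' _; rewrite cs1.
  have ex1 : bl a1 x = bl a1 x' by apply/eqP; rewrite bl_eq.
  have ey1 : bl a1 y = bl a1 y' by apply/eqP; rewrite bl_eq.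
  have ex2 : bl a2 x = bl a2 x' by apply/eqP; rewrite bl_eq //; apply: c12.
  have ey2 : bl a2 y = bl a2 y' by apply/eqP; rewrite bl_eq //; apply: c12.
  have e2 : connect a2 x y = connect a2 x' y'.
    by rewrite -!(bl_eq s2) ex2 ey2.
  case c2: (connect a2 x y).
    have c2' : connect a2 x' y' by rewrite -e2.
    rewrite (Q_in s2 q23 c2) (Q_in s2 q23 c2') (Q_out s1 q12 nc) (Q_out s1 q12 nc').
    by rewrite ex1 ey1.
  have c2' : ~~ connect a2 x' y' by rewrite -e2 c2.
  rewrite (Q_out s2 q23 (negbT c2)) (Q_out s2 q23 c2').
  by rewrite ex2 ey2.
exists (fun B B' : {set T} => (B != B') && [exists x in B, exists y in B', a3 x y]).
split.
- move=> B B' _ _; rewrite eq_sym; congr (_ && _).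
  apply/existsP/existsP => -[x /andP[xB /existsP[y /andP[yB' axy]]]];
    exists y; rewrite yB' /=; apply/existsP; exists x; by rewrite xB s3.
- by move=> B _; rewrite eqxx.
move=> x y.
case c1: (connect a1 x y).
  rewrite (Q_in s2 q23 (c12 _ _ c1)) (Q_in s1 q12 c1).
  case: (a1 x y) => //=; apply/esym/negbTE/negP.
  move=> /existsP[B /andP[Bb /existsP[B' /andP[B'b /and4P[xB yB' hB _]]]]].
  move: hB; rewrite (in_blocks s1 Bb xB) (in_blocks s1 B'b yB').
  by move/negP; apply; rewrite bl_eq.
have -> : a1 x y = false by apply/negP => /connect1; rewrite c1.
rewrite /=; apply/idP/idP => [axy|].
  apply/existsP; exists (bl a1 x); rewrite bl_blocks bl_refl /=.
  apply/existsP; exists (bl a1 y); rewrite bl_blocks bl_refl /= bl_eq // c1 /=.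
  by apply/existsP; exists x; rewrite bl_refl /=; apply/existsP; exists y; rewrite bl_refl.
move=> /existsP[B /andP[Bb /existsP[B' /andP[B'b /and4P[xB yB' _ hB]]]]].
move: hB; rewrite (in_blocks s1 Bb xB) (in_blocks s1 B'b yB').
move=> /existsP[x' /andP[xx' /existsP[y' /andP[yy' axy']]]].
rewrite in_bl in xx'; rewrite in_bl in yy'.
by rewrite (unif x x' y y') // c1.
Qed.

Lemma blk_in (a : rel T) i : blk a i \in blocks a.
Proof. exact: enum_valP. Qed.

Lemma blk_ex (a : rel T) i : exists x, x \in blk a i.
Proof. by case/imsetP: (blk_in i) => z _ ->; exists z; exact: bl_refl. Qed.

Lemma blk_gt0 (a : rel T) i : (0 < #|blk a i|)%N.
Proof. by case: (blk_ex i) => x xB; apply/card_gt0P; exists x. Qed.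

Lemma sum_blk (a : rel T) (P : pred {set T}) (F : {set T} -> nat) :
  (\sum_(i < #|blocks a| | P (blk a i)) F (blk a i) =
   \sum_(B in blocks a | P B) F B)%N.
Proof. by rewrite (big_enum_val_cond (I := {set T}) (A := pred_of_set (blocks a))). Qed.

Lemma sum_blkR (R : nzRingType) (a : rel T) (P : pred {set T}) (F : {set T} -> R) :
  (\sum_(i < #|blocks a| | P (blk a i)) F (blk a i) =
   \sum_(B in blocks a | P B) F B)%R.
Proof. by rewrite (big_enum_val_cond (I := {set T}) (A := pred_of_set (blocks a))). Qed.

Section Sym2.
Variable a : rel T.
Hypothesis sa : symmetric a.
Let csym : connect_sym a := sym_connect_sym sa.

Lemma blk_bl i x : x \in blk a i -> blk a i = bl a x.
Proof. exact: in_blocks (blk_in i). Qed.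

Lemma bdeg_val i x : regular_components a -> x \in blk a i ->
  bdeg a (blk a i) = deg a x.
Proof.
move=> reg xB; rewrite /bdeg; case: pickP => [x0 x0B|no]; last by have := no x; rewrite xB.
apply: reg; have := x0B; rewrite (blk_bl xB) in_bl; by rewrite csym.
Qed.

Lemma card_closed (C : {set T}) :
  (forall y z, y \in C -> connect a y z -> z \in C) ->
  #|C| = (\sum_(B in blocks a | B \subset C) #|B|)%N.
Proof.
move=> clC.
rewrite -sum1_card (partition_big (bl a) (mem (blocks a))) /=; last first.
  by move=> y _; exact: bl_blocks.
rewrite [RHS]big_mkcondr /=; apply: eq_bigr => B Bb.
transitivity (\sum_(y in B | B \subset C) 1)%N.
  apply: eq_bigl => y.
  have yBE : (bl a y == B) = (y \in B).
    apply/eqP/idP => [<-|yB]; first exact: bl_refl.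
    by rewrite (in_blocks sa Bb yB).
  rewrite yBE; case yB: (y \in B); rewrite ?andbT ?andbF //=.
  apply/idP/idP => [yC|sBC]; last exact: (subsetP sBC y yB).
  apply/subsetP => z; rewrite (in_blocks sa Bb yB) in_bl; exact: clC.
case: ifP => c.
  by rewrite (eq_bigl (mem B)) ?sum1_card // => y; rewrite andbT.
by rewrite big_pred0 // => y; rewrite andbF.
Qed.

Variables (b : rel T) (h : rel {set T}).
Hypothesis q : is_quot a b h.

Lemma Nsum_val i : Nsum a h i = (\sum_(B in blocks a | h (blk a i) B) #|B|)%N.
Proof.
have e := sum_blk a (fun B => h B (blk a i)) (fun B => #|B|); rewrite /= in e.
rewrite /Nsum e.
apply: eq_bigl => s; case sb: (s \in blocks a) => //=; rewrite (h_sym q) //; exact: blk_in.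
Qed.

Lemma Dval i x : regular_components a -> x \in blk a i ->
  (bdeg a (blk a i) + Nsum a h i)%N = deg b x.
Proof.
move=> reg xB; rewrite (bdeg_val reg xB) Nsum_val.
have -> : deg b x = #|[set y in [set: T] | b x y]|.
  by apply: eq_card => y; rewrite !inE.
rewrite (L_cnt sa q (in_setT x)) //; congr (_ + _)%N.
by apply: eq_bigl => B; rewrite subsetT (blk_bl xB).
Qed.

End Sym2.

End Graph.

Section LinAlg.
Local Open Scope ring_scope.
Lemma char_poly_sim (P : comNzRingType) n (M Q Qi : 'M[P]_n) :
  Q *m Qi = 1%:M -> Qi *m Q = 1%:M -> char_poly (Q *m M *m Qi) = char_poly M.
Proof.
move=> QQi QiQ; rewrite /char_poly.
have -> : char_poly_mx (Q *m M *m Qi) =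
   map_mx polyC Q *m char_poly_mx M *m map_mx polyC Qi.
  rewrite /char_poly_mx mulmxBr mulmxBl -!map_mxM.
  congr (_ - _).
  by rewrite mul_mx_scalar -scalemxAl -map_mxM QQi map_mx1 scalemx1.
rewrite !det_mulmx mulrC mulrA -det_mulmx -map_mxM QiQ.
by rewrite map_mx1 det1 mul1r.
Qed.

Lemma char_poly_lblock (P : comNzRingType) m p (A : 'M[P]_m) (X : 'M[P]_(p, m)) Y :
  char_poly (block_mx A 0 X Y) = char_poly A * char_poly Y.
Proof.
rewrite /char_poly /char_poly_mx map_block_mx scalar_mx_block.
rewrite opp_block_mx add_block_mx map_mx0 oppr0 addr0.
by rewrite det_lblock.
Qed.

Lemma complete_basis (F : fieldType) m p (K : 'M[F]_(m, m+p)) :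
  row_free K -> exists W : 'M[F]_(p, m+p), col_mx K W \in unitmx.
Proof.
move=> fK.
set U := row_ebase K; set L := col_ebase K.
have eK : K = L *m usubmx U.
  rewrite -{1}(mulmx_ebase K) (eqP fK) -/U -/L pid_mx_row -mulmxA.
  by rewrite -{1}(vsubmxK U) mul_row_col mul1mx mul0mx addr0.
exists (dsubmx U).
have -> : col_mx K (dsubmx U) = block_mx L 0 0 1%:M *m U.
  by rewrite -{2}(vsubmxK U) mul_block_col mul0mx addr0 mul0mx add0r mul1mx eK.
rewrite unitmx_mul row_ebase_unit andbT unitmxE det_ublock det1 mulr1 -unitmxE.
exact: col_ebase_unit.
Qed.

Lemma charpoly_dvd (F : fieldType) m p (M1 : 'M[{poly F}]_(m+p))
   (M2 : 'M[{poly F}]_m) (K : 'M[F]_(m, m+p)) :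
  row_free K -> map_mx polyC K *m M1 = M2 *m map_mx polyC K ->
  exists r, char_poly M1 = r * char_poly M2.
Proof.
move=> fK eKM.
have [W uQ] := complete_basis fK.
set Q0 := col_mx K W in uQ.
set Q := map_mx polyC Q0; set Qi := map_mx polyC (invmx Q0).
have QQi : Q *m Qi = 1%:M by rewrite -map_mxM mulmxV // map_mx1.
have QiQ : Qi *m Q = 1%:M by rewrite -map_mxM mulVmx // map_mx1.
have eKQ : map_mx polyC K *m Qi = row_mx 1%:M 0.
  have -> : map_mx polyC K = row_mx 1%:M 0 *m Q.
    by rewrite /Q map_col_mx mul_row_col mul1mx mul0mx addr0.
  by rewrite -mulmxA QQi mulmx1.
set Z := map_mx polyC W *m M1 *m Qi.
have eB : Q *m M1 *m Qi = block_mx M2 0 (lsubmx Z) (rsubmx Z).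
  rewrite /Q map_col_mx mul_col_mx mul_col_mx eKM -mulmxA eKQ -/Z.
  by rewrite mul_mx_row mulmx1 mulmx0 -[Z in col_mx _ Z]hsubmxK.
exists (char_poly (rsubmx Z)).
by rewrite -(char_poly_sim M1 QQi QiQ) eB char_poly_lblock mulrC.
Qed.

Lemma charpoly_dvd' (F : fieldType) n m (M1 : 'M[{poly F}]_n)
   (M2 : 'M[{poly F}]_m) (K : 'M[F]_(m, n)) :
  row_free K -> map_mx polyC K *m M1 = M2 *m map_mx polyC K ->
  exists r, char_poly M1 = r * char_poly M2.
Proof.
move=> fK.
have le : (m <= n)%N by rewrite -(eqP fK) rank_leq_col.
move: (n - m)%N (subnKC le) => p e; subst n.
exact: charpoly_dvd.
Qed.

Lemma row_free_K (F : fieldType) m n (K : 'M[F]_(m, n)) :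
  K *m K^T = 1%:M -> row_free K.
Proof.
move=> e; rewrite /row_free eqn_leq rank_leq_row /=.
by rewrite -{1}(mxrank1 F m) -e mxrankM_maxl.
Qed.

Lemma phiE (R : realType) (T : finType) (a : rel T) h :
  phi R a h = char_poly (map_mx polyC (Amx R a h) - 'X *: map_mx polyC (Dmx R a h)).
Proof.
rewrite /phi /char_poly /char_poly_mx; congr (\det _); apply/matrixP => i j.
rewrite !mxE rmorphB /= rmorphM /= mulr_natl opprB addrC.
by rewrite rmorphM /=; ring.
Qed.

End LinAlg.

Section Main.
Local Open Scope ring_scope.
Variables (R : realType) (T : finType) (a1 a2 a3 : rel T) (h12 h13 h23 : rel {set T}).
Hypotheses (s1 : symmetric a1) (s2 : symmetric a2) (s3 : symmetric a3).
Hypotheses (reg1 : regular_components a1) (reg2 : regular_components a2).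
Hypotheses (q12 : is_quot a1 a2 h12) (q13 : is_quot a1 a3 h13) (q23 : is_quot a2 a3 h23).

Local Notation k1 := #|blocks a1|.
Local Notation k2 := #|blocks a2|.
Local Notation B1 := (blk a1).
Local Notation B2 := (blk a2).
Definition sqn (n : nat) : R := Num.sqrt (n%:R).

Lemma sqn_sq n : sqn n * sqn n = n%:R.
Proof. by rewrite -expr2 sqr_sqrtr ?ler0n. Qed.

Lemma sqnM m n : sqn (m * n) = sqn m * sqn n.
Proof. by rewrite /sqn natrM sqrtrM ?ler0n. Qed.

Lemma sqn_neq0 n : (0 < n)%N -> sqn n != 0.
Proof. by move=> n0; rewrite sqrtr_eq0 -ltNge ltr0n. Qed.

Let c12 := connect_mono (fun x y => @quot_sub _ a1 a2 h12 x y q12).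

Lemma sub12 i c x : x \in B1 i -> (B1 i \subset B2 c) = (x \in B2 c).
Proof.
move=> xB; apply/idP/idP => [/subsetP sC|xC]; first exact: sC.
apply/subsetP => z; rewrite (blk_bl s1 xB) (blk_bl s2 xC) !in_bl; exact: c12.
Qed.

Lemma clo12 c y z : y \in B2 c -> connect a1 y z -> z \in B2 c.
Proof. by move=> yC cyz; rewrite (blk_bl s2 yC) in_bl; exact: c12. Qed.

Lemma sum12 c : (\sum_(i < k1 | B1 i \subset B2 c) #|B1 i|)%N = #|B2 c|.
Proof.
have e := sum_blk a1 (fun B => B \subset B2 c) (fun B => #|B|); rewrite /= in e.
by rewrite e -(card_closed s1 (@clo12 c)).
Qed.

Lemma sum12R c : \sum_(i < k1 | B1 i \subset B2 c) (#|B1 i|%:R : R) = #|B2 c|%:R.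
Proof. by rewrite -natr_sum sum12. Qed.

Lemma uniq2 i c d : B1 i \subset B2 c -> B1 i \subset B2 d -> c = d.
Proof.
case: (blk_ex i) => x xB; rewrite !(sub12 _ xB) => xc xd.
apply: enum_val_inj; have : B2 c = B2 d by rewrite (blk_bl s2 xc) (blk_bl s2 xd).
done.
Qed.

Lemma cont2 x : exists d, B2 d = bl a2 x.
Proof.
exists (enum_rank_in (bl_blocks a2 x) (bl a2 x)).
by rewrite /blk enum_rankK_in // bl_blocks.
Qed.

Definition Kmx : 'M[R]_(k2, k1) := \matrix_(c, i)
  if B1 i \subset B2 c then sqn #|B1 i| / sqn #|B2 c| else 0.

Lemma KKt : Kmx *m Kmx^T = 1%:M.
Proof.
apply/matrixP => c d; rewrite !mxE.
transitivity (\sum_i (if (B1 i \subset B2 c) && (c == d)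
                      then (#|B1 i|%:R : R) / #|B2 c|%:R else 0)).
  apply: eq_bigr => i _; rewrite !mxE.
  case: ifP => ic; case: ifP => id /=; rewrite ?mul0r ?mulr0 //.
    have ecd := uniq2 ic id; rewrite ecd eqxx /=.
    by rewrite mulf_div !sqn_sq.
  case: eqP => // ecd; by rewrite ecd id in ic.
rewrite -big_mkcond /=; case: (eqVneq c d) => [e|ne]; last first.
  by rewrite big_pred0 // => i; rewrite andbF.
rewrite (eq_bigl (fun i => B1 i \subset B2 c)) => [|i]; last by rewrite andbT.
rewrite -mulr_suml sum12R mulfV //.
by rewrite pnatr_eq0 -lt0n blk_gt0.
Qed.

Lemma KD : Kmx *m Dmx R a1 h13 = Dmx R a2 h23 *m Kmx.
Proof.
apply/matrixP => c j; rewrite !mxE.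
rewrite (bigD1 j) //= big1 ?addr0; last first.
  by move=> i /negbTE ne; rewrite !mxE ne mulr0.
rewrite [RHS](bigD1 c) //= [X in _ = _ + X]big1 ?addr0; last first.
  by move=> e /negbTE ne; rewrite !mxE eq_sym ne mul0r.
rewrite !mxE !eqxx; case: ifP => jc; last by rewrite mul0r mulr0.
case: (blk_ex j) => x xB.
have xc : x \in B2 c by rewrite -(sub12 _ xB).
by rewrite (Dval s1 q13 reg1 xB) (Dval s2 q23 reg2 xc) mulrC.
Qed.


Lemma KA_lhs c j : (Kmx *m Amx R a1 h13) c j =
  sqn #|B1 j| / sqn #|B2 c| *
   ((B1 j \subset B2 c)%:R * (bdeg a1 (B1 j))%:R +
    \sum_(i | (B1 i \subset B2 c) && h13 (B1 i) (B1 j)) (#|B1 i|%:R : R)).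
Proof.
rewrite mxE (bigD1 j) //= mulrDr; congr (_ + _).
  by rewrite !mxE eqxx; case: ifP => _; rewrite ?mul1r ?mul0r ?mulr0.
rewrite mulr_sumr [RHS]big_mkcond [RHS](bigD1 j) //= (h_irr q13 (blk_in j)).
rewrite andbF add0r; apply: eq_bigr => i ne; rewrite !mxE (negbTE ne).
case: ifP => ic; case: ifP => hij /=; rewrite ?mul0r ?mulr0 //.
have e := sqn_sq #|B1 i|; rewrite -/(sqn _).
by rewrite sqnM -e; ring.
Qed.

Lemma h_cross i j c d x : B2 d = bl a2 x -> x \in B1 j -> c != d ->
  B1 i \subset B2 c -> h13 (B1 i) (B1 j) = h23 (B2 c) (B2 d).
Proof.
move=> ed xB ne ic; case: (blk_ex i) => y yB.
have yc : y \in B2 c by rewrite -(sub12 _ yB).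
have n2 : ~~ connect a2 y x.
  apply: contra ne => cyx; apply/eqP/enum_val_inj.
  by rewrite -/(blk a2 c) -/(blk a2 d) ed (blk_bl s2 yc); apply/eqP; rewrite bl_eq.
have n1 : ~~ connect a1 y x by apply: contra n2; apply: c12.
rewrite (blk_bl s1 yB) (blk_bl s1 xB) (blk_bl s2 yc) ed.
by rewrite -(Q_out s1 q13 n1) -(Q_out s2 q23 n2).
Qed.

Lemma KA : Kmx *m Amx R a1 h13 = Amx R a2 h23 *m Kmx.
Proof.
apply/matrixP => c j; rewrite KA_lhs.
case: (blk_ex j) => x xB; case: (cont2 x) => d ed.
have jd : B1 j \subset B2 d by rewrite (sub12 _ xB) ed bl_refl.
have xd : x \in B2 d by rewrite ed bl_refl.
rewrite [RHS]mxE [RHS](bigD1 d) //= [X in _ = _ + X]big1 ?addr0; last first.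
  move=> e ne; rewrite /Kmx !mxE; case je: (B1 j \subset B2 e); last by rewrite mulr0.
  by rewrite (uniq2 je jd) eqxx in ne.
rewrite /Kmx !mxE jd.
case: (eqVneq c d) => [->|ne].
  rewrite jd mul1r mulrC; congr (_ * _).
  rewrite (bdeg_val s1 reg1 xB) (bdeg_val s2 reg2 xd) -natr_sum -natrD.
  congr (_%:R).
  have e := sum_blk a1 (fun B => (B \subset B2 d) && h13 B (B1 j)) (fun B => #|B|).
  rewrite /= in e; rewrite e.
  have -> : deg a2 x = #|[set y in B2 d | a3 x y]|.
    apply: eq_card => y; rewrite !inE ed in_bl.
    apply/idP/andP => [axy|[cxy]]; last by rewrite (Q_in s2 q23 cxy).
    have cxy := connect1 axy; by rewrite cxy (Q_in s2 q23 cxy).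
  rewrite (L_cnt s1 q13 xd (@clo12 d)); congr (_ + _)%N.
  apply: eq_bigl => B; case Bb: (B \in blocks a1) => //=.
  by rewrite (h_sym q13 Bb (blk_in j)) (blk_bl s1 xB).
have jc : (B1 j \subset B2 c) = false.
  by apply/negP => jc; move: ne; rewrite (uniq2 jc jd) eqxx.
rewrite jc mul0r add0r -/(sqn _).
rewrite (eq_bigl (fun i => (B1 i \subset B2 c) && h23 (B2 c) (B2 d))); last first.
  move=> i; case ic: (B1 i \subset B2 c) => //=.
  exact: h_cross ed xB ne ic.
case: ifP => hcd; last by rewrite big_pred0 ?mulr0 ?mul0r // => i; rewrite andbF.
rewrite (eq_bigl (fun i => B1 i \subset B2 c)) => [|i]; last by rewrite andbT.
rewrite sum12R sqnM.
have nc := sqn_neq0 (blk_gt0 c); have nd := sqn_neq0 (blk_gt0 d).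
rewrite -(sqn_sq #|B2 c|); field.
by rewrite nc nd.
Qed.

End Main.


Theorem mainTheorem9 (R : realType) (T : finType) (a1 a2 a3 : rel T) :
  simple_graph a1 -> simple_graph a2 -> simple_graph a3 ->
  regular_components a1 -> regular_components a2 ->
  divides a1 a2 -> divides a2 a3 ->
  divides a1 a3 /\
  (forall h13 h23 : rel {set T}, is_quot a1 a3 h13 -> is_quot a2 a3 h23 ->
     pdivides (phi R a2 h23) (phi R a1 h13)).
Proof.
move=> [sy1 _] [sy2 _] [sy3 _] reg1 reg2 d12 d23; split.
  exact: div_trans sy1 sy2 sy3 d12 d23.
move=> h13 h23 q13 q23; case: d12 => h12 q12.
rewrite /pdivides !phiE.
apply: (@charpoly_dvd' _ _ _ _ _ (Kmx R a1 a2)).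
  exact: row_free_K (KKt R sy1 sy2 q12).
rewrite mulmxBr mulmxBl -!scalemxAr -!scalemxAl -!map_mxM.
by rewrite (KA R sy1 sy2 reg1 reg2 q12 q13 q23) (KD R sy1 sy2 reg1 reg2 q12 q13 q23).
Qed.
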